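(* Let $L$ be a finite set with $|L|=n$. Then: (a) the refinement relation $\preceq$ on $\tilde P_{\mathrm I}$ is a partial order; (b) $\{s(\mathbf A):\mathbf A\in P_{\mathrm{II}}\}$ equals the set $\tilde P_{\mathrm{II}}$ of nonempty down-sets of $(\tilde P_{\mathrm I},\preceq)$, and for all $\tilde{\mathbf A},\tilde{\mathbf B}\in\tilde P_{\mathrm{II}}$: there exist $\mathbf A,\mathbf B\in P_{\mathrm{II}}$ with $s(\mathbf A)=\tilde{\mathbf A}$, $s(\mathbf B)=\tilde{\mathbf B}$ and $\mathbf B\subseteq\mathbf A$ if and only if $\tilde{\mathbf B}\subseteq\tilde{\mathbf A}$; (c) $\{s(\mathfrak A):\mathfrak A\in P_{\mathrm{III}}\}$ equals the set of nonempty up-sets of $(\tilde P_{\mathrm{II}},\subseteq)$, and for all nonempty up-sets $\tilde{\mathfrak A},\tilde{\mathfrak B}$ of $(\tilde P_{\mathrm{II}},\subseteq)$: there exist $\mathfrak A,\mathfrak B\in P_{\mathrm{III}}$ with $s(\mathfrak A)=\tilde{\mathfrak A}$, $s(\mathfrak B)=\tilde{\mathfrak B}$ and $\mathfrak B\subseteq\mathfrak A$ if and only if $\tilde{\mathfrak B}\subseteq\tilde{\mathfrak A}$.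
   Context: A set partition of $L$ is a set $\xi$ of nonempty, pairwise disjoint subsets of $L$ whose union is $L$; $P_{\mathrm I}$ is the set of set partitions of $L$, with refinement $\upsilon\preceq\xi$ iff every $Y\in\upsilon$ is contained in some $X\in\xi$. An integer partition of $n$ is a finite multiset of positive integers summing to $n$; $\tilde P_{\mathrm I}$ is the set of integer partitions of $n$. The type map is $s(\xi)=$ the multiset $\{|X|:X\in\xi\}$. Refinement on $\tilde P_{\mathrm I}$: $\tilde\upsilon\preceq\tilde\xi$ iff there exist $\upsilon,\xi\in P_{\mathrm I}$ with $s(\upsilon)=\tilde\upsilon$, $s(\xi)=\tilde\xi$, $\upsilon\preceq\xi$. A down-set (resp. up-set) of a poset is a subset closed downward (resp. upward). $P_{\mathrm{II}}$ is the set of nonempty down-sets of $(P_{\mathrm I},\preceq)$, ordered by inclusion; $P_{\mathrm{III}}$ is the set of nonempty up-sets of $(P_{\mathrm{II}},\subseteq)$, ordered by inclusion. $s$ acts elementwise on these: for $\mathbf A\in P_{\mathrm{II}}$, $s(\mathbf A)=\{s(\xi):\xi\in\mathbf A\}$ (a set), and for $\mathfrak A\in P_{\mathrm{III}}$, $s(\mathfrak A)=\{s(\mathbf A):\mathbf A\in\mathfrak A\}$. *)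

(* Defs.v *)
From mathcomp Require Import all_boot.
Set Implicit Arguments. Unset Strict Implicit. Unset Printing Implicit Defensive.

Definition setparts (L : finType) : {set {set {set L}}} :=
  [set P : {set {set L}} | partition P [set: L]].

Definition refines (L : finType) (u x : {set {set L}}) : bool :=
  [forall Y in u, [exists X in x, Y \subset X]].

(* An integer partition (multiset of positive integers) of n is encoded by
   its multiplicity function m : k |-> (number of parts equal to k),
   for k = 0..n (all parts are <= n); m 0 = 0 (parts are positive), and
   sum_k k * m k = n. *)
Definition IP (n : nat) := {ffun 'I_n.+1 -> 'I_n.+1}.

Definition intparts (n : nat) : {set IP n} :=
  [set m : IP n | (m ord0 == ord0) && (\sum_(k < n.+1) (k * m k)%N == n)].

(* The type map s: the multiset {|X| : X in xi}, as a multiplicity function.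
   (When |L| = n, all the counts are <= n, so [inord] does not truncate.) *)
Definition ptype (L : finType) (n : nat) (xi : {set {set L}}) : IP n :=
  [ffun k : 'I_n.+1 => inord #|[set X in xi | #|X| == k]|].

Definition irefines (L : finType) (n : nat) (a b : IP n) : bool :=
  [exists u in setparts L, exists x in setparts L,
     [&& ptype n u == a, ptype n x == b & refines u x]].

Definition is_downset (T : finType) (S : {set T}) (le : rel T) (D : {set T}) : bool :=
  (D \subset S) && [forall x in D, forall y in S, le y x ==> (y \in D)].

Definition is_upset (T : finType) (S : {set T}) (le : rel T) (U : {set T}) : bool :=
  (U \subset S) && [forall x in U, forall y in S, le x y ==> (y \in U)].

Definition subset_rel (T : finType) : rel {set T} := fun A B => A \subset B.

Definition ne_downsets (T : finType) (S : {set T}) (le : rel T) : {set {set T}} :=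
  [set D : {set T} | (D != set0) && is_downset S le D].

Definition ne_upsets (T : finType) (S : {set T}) (le : rel T) : {set {set T}} :=
  [set U : {set T} | (U != set0) && is_upset S le U].

Definition PII (L : finType) : {set {set {set {set L}}}} :=
  ne_downsets (setparts L) (@refines L).

Definition PIII (L : finType) : {set {set {set {set {set L}}}}} :=
  ne_upsets (PII L) (@subset_rel _).

Definition ptypeII (L : finType) (n : nat) (A : {set {set {set L}}}) : {set IP n} :=
  [set ptype n xi | xi in A].

Definition ptypeIII (L : finType) (n : nat) (F : {set {set {set {set L}}}})
  : {set {set IP n}} :=
  [set ptypeII n A | A in F].

Definition PtII (L : finType) (n : nat) : {set {set IP n}} :=
  ne_downsets (intparts n) (@irefines L n).

Definition PtIII (L : finType) (n : nat) : {set {set {set IP n}}} :=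
  ne_upsets (PtII L n) (@subset_rel _).

(* Main.v *)
Require Import Defs.
From mathcomp Require Import all_boot zify.
Set Implicit Arguments. Unset Strict Implicit. Unset Printing Implicit Defensive.

Lemma glue (T : finType) (K : eqType) (A B : {set T}) (kA kB : T -> K) :
  (forall k, #|[set a in A | kA a == k]| = #|[set b in B | kB b == k]|) ->
  exists g : T -> T,
   [/\ {in A, forall a, g a \in B /\ kB (g a) = kA a}, {in A &, injective g} &
       forall b, b \in B -> exists2 a, a \in A & g a = b].
Proof.
move=> hc.
pose g a := nth a (enum [set b in B | kB b == kA a])
                  (index a (enum [set a' in A | kA a' == kA a])).
have gin : {in A, forall a, g a \in [set b in B | kB b == kA a]}.
  move=> a aA; rewrite -mem_enum /g; apply: mem_nth.
  rewrite -cardE -hc cardE index_mem mem_enum inE aA eqxx //.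
exists g; split.
- move=> a aA; have := gin a aA; rewrite inE => /andP[-> /eqP ->]; by [].
- move=> a1 a2 a1A a2A e.
  have k12 : kA a1 = kA a2.
    have := gin a1 a1A; have := gin a2 a2A; rewrite !inE -e.
    by move=> /andP[_ /eqP ->] /andP[_ /eqP ->].
  move: e; rewrite /g k12.
  set SA := [set a' in A | kA a' == kA a2]; set SB := [set b in B | kB b == kA a2].
  have i1 : a1 \in SA by rewrite inE a1A k12 eqxx.
  have i2 : a2 \in SA by rewrite inE a2A eqxx.
  have s1 : index a1 (enum SA) < size (enum SB) by rewrite -cardE -hc cardE index_mem mem_enum.
  have s2 : index a2 (enum SA) < size (enum SB) by rewrite -cardE -hc cardE index_mem mem_enum.
  rewrite (set_nth_default a2 a1 s1) => /eqP; rewrite nth_uniq ?enum_uniq // => /eqP e.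
  rewrite -[a1](nth_index a1 (s := enum SA)) ?mem_enum // e nth_index ?mem_enum //.
- move=> b bB.
  set SA := [set a' in A | kA a' == kB b]; set SB := [set b' in B | kB b' == kB b].
  have bS : b \in SB by rewrite inE bB eqxx.
  have ib : index b (enum SB) < size (enum SA) by rewrite -cardE hc cardE index_mem mem_enum.
  have aS : nth b (enum SA) (index b (enum SB)) \in SA by rewrite -mem_enum mem_nth.
  exists (nth b (enum SA) (index b (enum SB))); first by move: aS; rewrite inE => /andP[].
  move: aS; rewrite {1}inE => /andP[_ /eqP ka].
  rewrite /g ka -/SA -/SB index_uniq ?enum_uniq //.
  have ib' : index b (enum SB) < size (enum SB) by rewrite index_mem mem_enum.
  by rewrite (set_nth_default b) // nth_index ?mem_enum.
Qed.
Lemma sub_filt (T : finType) (x : {set T}) (P : pred T) : [set X in x | P X] \subset x.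
Proof. by apply/subsetP => X; rewrite inE => /andP[]. Qed.

Lemma part_size (L : finType) (x : {set {set L}}) :
  partition x [set: L] -> #|x| <= #|L|.
Proof.
move=> px; rewrite -cardsT (card_partition px) -sum1_card.
apply: leq_sum => X Xx; rewrite card_gt0; exact: (partition_neq0 px Xx).
Qed.

Lemma ptypeE (L : finType) n (x : {set {set L}}) (k : 'I_n.+1) :
  #|L| = n -> partition x [set: L] ->
  nat_of_ord (ptype n x k) = #|[set X in x | #|X| == k]|.
Proof.
move=> hn px; rewrite /ptype ffunE inordK // ltnS.
apply: leq_trans (subset_leq_card (sub_filt _ _)) _; rewrite -hn; exact: part_size px.
Qed.

Lemma ptype_int (L : finType) n (x : {set {set L}}) :
  #|L| = n -> partition x [set: L] -> ptype n x \in intparts n.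
Proof.
move=> hn px; rewrite inE; apply/andP; split.
  apply/eqP/val_inj; rewrite /= ptypeE //; apply/eqP; rewrite cards_eq0; apply/eqP.
  apply/setP => X; rewrite !inE; apply/negbTE; apply/negP => /andP[Xx].
  rewrite cards_eq0 => /eqP X0; move: Xx; rewrite X0 (partition0 px) //.
apply/eqP.
transitivity (\sum_(X in x) #|X|); last by rewrite -(card_partition px) cardsT.
rewrite [RHS](partition_big (fun X : {set L} => (inord #|X| : 'I_n.+1)) xpredT) //=.
apply: eq_bigr => k _; rewrite ptypeE // mulnC -sum_nat_const.
rewrite [LHS]big_mkcond [RHS]big_mkcond /=; apply: eq_bigr => X _; rewrite inE.
case Xx: (X \in x) => //=.
have hX : #|X| < n.+1 by rewrite ltnS; move: (max_card (mem X)); rewrite hn.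
have -> : (inord #|X| == k) = (#|X| == k).
  apply/eqP/eqP => [<-|e]; first by rewrite inordK.
  by apply/val_inj; rewrite /= inordK // e.
by case: eqP => //= e.
Qed.

Lemma nparts (L : finType) n (x : {set {set L}}) :
  #|L| = n -> partition x [set: L] -> \sum_(k < n.+1) nat_of_ord (ptype n x k) = #|x|.
Proof.
move=> hn px; rewrite -sum1_card.
rewrite [RHS](partition_big (fun X : {set L} => (inord #|X| : 'I_n.+1)) xpredT) //=.
apply: eq_bigr => k _; rewrite ptypeE // -sum1_card.
apply: eq_bigl => X; rewrite inE; case Xx: (X \in x) => //=.
have hX : #|X| < n.+1 by rewrite ltnS; move: (max_card (mem X)); rewrite hn.
apply/eqP/eqP => [e|<-]; last by rewrite inordK.
by apply/val_inj; rewrite /= inordK // e.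
Qed.
Lemma exists_sub (T : finType) (S : {set T}) k : k <= #|S| ->
  exists2 X : {set T}, X \subset S & #|X| = k.
Proof.
move=> kS; exists [set x in take k (enum S)].
  by apply/subsetP => x; rewrite inE => /mem_take; rewrite mem_enum.
rewrite cardsE; move/card_uniqP: (take_uniq k (enum_uniq (mem S))) => ->.
by rewrite size_takel // -cardE.
Qed.

Lemma exists_part (T : finType) (s : seq nat) (S : {set T}) :
  all (leq 1) s -> sumn s = #|S| ->
  exists P, partition P S /\ forall j, #|[set X in P | #|X| == j]| = count_mem j s.
Proof.
elim: s S => [|k s IH] S /=.
  move=> _ /esym /eqP; rewrite cards_eq0 => /eqP ->.
  exists set0; split; first by rewrite partition_set0.
  by move=> j; apply/eqP; rewrite cards_eq0; apply/eqP/setP => Y; rewrite !inE.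
case/andP=> k1 alls hsum.
have [X XS cX] : exists2 X : {set T}, X \subset S & #|X| = k.
  by apply: exists_sub; rewrite -hsum leq_addr.
have [P [pP cP]] : exists P, partition P (S :\: X) /\
     forall j, #|[set X in P | #|X| == j]| = count_mem j s.
  apply: IH => //; rewrite cardsD (setIidPr XS) cX -hsum; lia.
have X0 : X != set0 by rewrite -card_gt0 cX.
have dX : [disjoint X & S :\: X].
  by rewrite -setI_eq0; apply/eqP/setP => y; rewrite !inE; case: (y \in X).
have XnP : X \notin P.
  apply/negP => XP; have := partitionS pP XP => sub.
  case/set0Pn: X0 => y yX; have := subsetP sub y yX; rewrite !inE yX //.
exists (X |: P); split.
  have := partitionU1 pP X0 dX.
  have -> : X :|: S :\: X = S.
    apply/setP => y; rewrite !inE; case yX: (y \in X) => //=.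
    by rewrite (subsetP XS).
  by [].
move=> j; rewrite -cP.
case: (boolP (#|X| == j)) => hj.
  have -> : [set Y in X |: P | #|Y| == j] = X |: [set Y in P | #|Y| == j].
    apply/setP => Y; rewrite !inE; case: (boolP (Y == X)) => [/eqP->|] //=.
  rewrite cardsU1 inE (negbTE XnP) /= -cX (eqP hj) eqxx //.
have -> : [set Y in X |: P | #|Y| == j] = [set Y in P | #|Y| == j].
  apply/setP => Y; rewrite !inE; case: (boolP (Y == X)) => [/eqP->|] //=.
  by rewrite (negbTE hj) andbF.
by rewrite -cX (negbTE hj).
Qed.

Lemma ptype_surj (L : finType) n (m : IP n) :
  #|L| = n -> m \in intparts n -> exists2 x, partition x [set: L] & ptype n x = m.
Proof.
move=> hn; rewrite inE => /andP[/eqP m0 /eqP msum].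
pose s := \big[cat/[::]]_(k < n.+1) nseq (m k) (nat_of_ord k).
have alls : all (leq 1) s.
  apply: (big_ind (fun s => all (leq 1) s)) => //.
    by move=> a b ha hb; rewrite all_cat ha hb.
  move=> k _; rewrite all_nseq; case: (posnP (nat_of_ord k)) => [k0|kp]; last by apply/orP; right.
  by rewrite (_ : k = ord0) ?m0 //; apply: val_inj.
have ssum : sumn s = #|[set: L]|.
  rewrite cardsT hn -[RHS]msum /s (big_morph sumn sumn_cat (erefl (sumn [::]))).
  by apply: eq_bigr => k _; rewrite sumn_nseq.
have [x [px cx]] := exists_part alls ssum.
exists x => //; apply/ffunP => k; apply/val_inj; rewrite /= ptypeE // cx.
rewrite /s (big_morph (count_mem (nat_of_ord k)) (count_cat _) (erefl (count_mem (nat_of_ord k) [::]))).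
rewrite (bigD1 k) //= count_nseq /= eqxx mul1n big1 ?addn0 // => i ik.
by rewrite count_nseq /= (inj_eq val_inj) (negbTE ik).
Qed.

Lemma pb_mem (L : finType) (P : {set {set L}}) l : partition P [set: L] -> pblock P l \in P.
Proof. by move=> pP; apply: pblock_mem; rewrite (cover_partition pP) inE. Qed.

Lemma pb_in (L : finType) (P : {set {set L}}) l : partition P [set: L] -> l \in pblock P l.
Proof. by move=> pP; rewrite mem_pblock (cover_partition pP) inE. Qed.

Lemma pb_eq (L : finType) (P : {set {set L}}) l Y : partition P [set: L] -> Y \in P ->
  (pblock P l == Y) = (l \in Y).
Proof.
move=> pP YP; apply/eqP/idP => [<-|lY]; first exact: pb_in.
exact: def_pblock (partition_trivIset pP) YP lY.
Qed.

Lemma sametype_perm (L : finType) n (x y : {set {set L}}) :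
  #|L| = n -> partition x [set: L] -> partition y [set: L] -> ptype n x = ptype n y ->
  exists s : L -> L, injective s /\ [set s @: (Y : {set L}) | Y in y] = x.
Proof.
move=> hn px py e.
have hc : forall k, #|[set a in y | #|a| == k]| = #|[set b in x | #|b| == k]|.
  move=> k; case: (ltnP k n.+1) => kn.
    have := congr1 (fun m : IP n => nat_of_ord (m (Ordinal kn))) e.
    by rewrite /= !ptypeE.
  have emp : forall P : {set {set L}}, [set a in P | #|a| == k] = set0.
    move=> P; apply/setP => a; rewrite !inE; apply/negbTE; apply/negP => /andP[_ /eqP ak].
    by move: (max_card (mem a)); rewrite hn ak leqNgt kn.
  by rewrite !emp.
have [f [fB finj fsurj]] := glue hc.
have hc2 : forall k, #|[set a in [set: L] | f (pblock y a) == k]| =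
                     #|[set b in [set: L] | pblock x b == k]|.
  move=> k; case: (boolP (k \in x)) => kx.
    have [Y Yy fY] := fsurj k kx.
    have -> : [set a in [set: L] | f (pblock y a) == k] = Y.
      apply/setP => a; rewrite !inE -fY (inj_in_eq finj) ?pb_eq //; move: (pb_mem a py); by [].
    have -> : [set b in [set: L] | pblock x b == k] = k.
      by apply/setP => b; rewrite !inE pb_eq.
    by rewrite -fY; case: (fB Y Yy) => _ ->.
  have emp : forall (g : L -> {set L}), (forall a, g a \in x) -> [set a in [set: L] | g a == k] = set0.
    move=> g hg; apply/setP => a; rewrite !inE; apply/negbTE; apply: contraNneq kx => <-; exact: hg.
  rewrite !emp //.
    by move=> a; case: (fB (pblock y a) (pb_mem a py)).
  by move=> a; move: (pb_mem a px).
have [s [sB sinj ssurj]] := glue hc2.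
have sinj' : injective s by move=> a b; apply: sinj; rewrite inE.
exists s; split => //.
have sY : forall Y, Y \in y -> s @: Y = f Y.
  move=> Y Yy; apply/setP => b; apply/imsetP/idP => [[a aY ->]|bY].
    have pa : pblock y a = Y by apply/eqP; rewrite (pb_eq _ py Yy).
    case: (sB a (in_setT a)) => _; rewrite pa => <-; exact: pb_in.
  have [a _ sa] := ssurj b (in_setT b).
  exists a => //.
  have fYx : f Y \in x by case: (fB Y Yy).
  have pb : pblock x b = f Y by apply/eqP; rewrite (pb_eq b px fYx).
  case: (sB a (in_setT a)) => _; rewrite sa pb => hf.
  have pa : pblock y a = Y.
    apply: finj => //; first by move: (pb_mem a py).
  by rewrite -pa; exact: pb_in.
apply/setP => X; apply/imsetP/idP => [[Y Yy ->]|Xx].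
  by rewrite sY //; case: (fB Y Yy).
have [Y Yy fY] := fsurj X Xx.
by exists Y => //; rewrite sY.
Qed.

Definition img (L : finType) (s : L -> L) (P : {set {set L}}) : {set {set L}} :=
  [set s @: (Y : {set L}) | Y in P].

Lemma imsetT_inj (L : finType) (s : L -> L) : injective s -> s @: [set: L] = [set: L].
Proof.
move=> si; apply/eqP; rewrite eqEcard subsetT /= card_imset //.
Qed.

Lemma img_part (L : finType) (s : L -> L) P : injective s ->
  partition P [set: L] -> partition (img s P) [set: L].
Proof. by move=> si pP; rewrite /img -(imsetT_inj si) imset_partition. Qed.

Lemma img_type (L : finType) n (s : L -> L) P : injective s ->
  ptype n (img s P) = ptype n P.
Proof.
move=> si; apply/ffunP => k; rewrite !ffunE; congr inord.
have -> : [set X in img s P | #|X| == k] = img s [set Y in P | #|Y| == k].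
  apply/setP => X; apply/idP/imsetP => [|[Y]].
    rewrite inE => /andP[/imsetP[Y YP ->] hk]; rewrite card_imset // in hk.
    by exists Y => //; rewrite inE YP.
  move=> /setIdP[YP hk] ->.
  by rewrite inE card_imset // hk andbT; apply: imset_f.
by rewrite card_imset //; apply: imset_inj.
Qed.

Lemma img_ref (L : finType) (s : L -> L) u x :
  refines u x -> refines (img s u) (img s x).
Proof.
move=> /forall_inP h; apply/forall_inP => _ /imsetP[Y Yu ->].
have /exists_inP [X Xx YX] := h Y Yu.
by apply/exists_inP; exists (s @: X); [apply: imset_f | apply: imsetS].
Qed.

Lemma refines_trans (L : finType) (u x z : {set {set L}}) :
  refines u x -> refines x z -> refines u z.
Proof.
move=> /forall_inP h1 /forall_inP h2; apply/forall_inP => Y Yu.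
have /exists_inP [X Xx YX] := h1 Y Yu.
have /exists_inP [Z Zz XZ] := h2 X Xx.
by apply/exists_inP; exists Z => //; apply: subset_trans XZ.
Qed.

Lemma refines_refl (L : finType) (u : {set {set L}}) : refines u u.
Proof. by apply/forall_inP => Y Yu; apply/exists_inP; exists Y. Qed.

Lemma refines_card (L : finType) (u x : {set {set L}}) :
  partition u [set: L] -> partition x [set: L] -> refines u x ->
  #|x| <= #|u| /\ (#|u| = #|x| -> u = x).
Proof.
move=> pu px /forall_inP r.
pose h (Y : {set L}) := odflt set0 [pick X in x | Y \subset X].
have hP : forall Y, Y \in u -> h Y \in x /\ Y \subset h Y.
  move=> Y Yu; rewrite /h; case: pickP => [X /andP[Xx YX] | none] /=; first by [].
  by have /exists_inP [X Xx YX] := r Y Yu; move: (none X); rewrite Xx YX.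
have hl : forall l, h (pblock u l) = pblock x l.
  move=> l; case: (hP _ (pb_mem l pu)) => hx hs.
  by apply/esym/eqP; rewrite pb_eq //; apply: (subsetP hs); apply: pb_in.
have xsub : x \subset h @: u.
  apply/subsetP => X Xx; case/set0Pn: (partition_neq0 px Xx) => l lX.
  apply/imsetP; exists (pblock u l); first by move: (pb_mem l pu).
  by rewrite hl; apply/esym/eqP; rewrite pb_eq.
have c1 : #|x| <= #|h @: u| := subset_leq_card xsub.
have c2 : #|h @: u| <= #|u| := leq_imset_card _ _.
split; first exact: leq_trans c1 c2.
move=> e.
have /imset_injP hinj : #|h @: u| == #|u| by rewrite eqn_leq c2 e.
have xu : x \subset u.
  apply/subsetP => X Xx; have /imsetP [Y Yu XY] := subsetP xsub X Xx.
  have XsY : X \subset Y.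
    apply/subsetP => l lX.
    have pl : pblock u l = Y.
      apply: hinj => //; first by move: (pb_mem l pu).
      by rewrite hl -XY; apply/eqP; rewrite pb_eq.
    by rewrite -pl pb_in.
  have YX : Y \subset X by rewrite XY; case: (hP Y Yu).
  by rewrite (_ : X = Y) //; apply/eqP; rewrite eqEsubset XsY YX.
by apply/esym/eqP; rewrite eqEcard xu e leqnn.
Qed.

Lemma downP (T : finType) (S : {set T}) (le : rel T) (D : {set T}) :
  D \in ne_downsets S le <->
  [/\ D != set0, D \subset S & forall x y, x \in D -> y \in S -> le y x -> y \in D].
Proof.
rewrite inE /is_downset; split.
  case/and3P => D0 DS /forall_inP h; split => // x y xD yS lyx.
  by have /forall_inP h2 := h x xD; have /implyP := h2 y yS; apply.
case=> D0 DS h; rewrite D0 DS /=; apply/forall_inP => x xD; apply/forall_inP => y yS.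
by apply/implyP; apply: h.
Qed.

Lemma upP (T : finType) (S : {set T}) (le : rel T) (D : {set T}) :
  D \in ne_upsets S le <->
  [/\ D != set0, D \subset S & forall x y, x \in D -> y \in S -> le x y -> y \in D].
Proof.
rewrite inE /is_upset; split.
  case/and3P => D0 DS /forall_inP h; split => // x y xD yS lyx.
  by have /forall_inP h2 := h x xD; have /implyP := h2 y yS; apply.
case=> D0 DS h; rewrite D0 DS /=; apply/forall_inP => x xD; apply/forall_inP => y yS.
by apply/implyP; apply: h.
Qed.

Lemma irefP (L : finType) n a b :
  irefines L a b <-> exists u x, [/\ partition u [set: L], partition x [set: L],
                      ptype n u = a, ptype n x = b & refines u x].
Proof.
split.
  case/exists_inP => u; rewrite inE => pu /exists_inP [x]; rewrite inE => px /and3P[/eqP ua /eqP xb r].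
  by exists u, x.
case=> u [x [pu px ua xb r]]; apply/exists_inP; exists u; first by rewrite inE.
apply/exists_inP; exists x; first by rewrite inE.
by rewrite ua xb eqxx eqxx r.
Qed.

Lemma ref_iref (L : finType) n (u x : {set {set L}}) :
  partition u [set: L] -> partition x [set: L] -> refines u x ->
  irefines L (ptype n u) (ptype n x).
Proof. by move=> pu px r; apply/irefP; exists u, x. Qed.

Lemma down (L : finType) n (x : {set {set L}}) a : #|L| = n ->
  partition x [set: L] -> irefines L a (ptype n x) ->
  exists u, [/\ partition u [set: L], ptype n u = a & refines u x].
Proof.
move=> hn px /irefP [u' [x' [pu' px' ua xb r]]].
have [s [si sx]] := sametype_perm hn px px' (esym xb).
exists (img s u'); split.
- exact: img_part.
- by rewrite img_type.
- by rewrite -sx; apply: img_ref.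
Qed.

Definition pre (L : finType) n (tA : {set IP n}) : {set {set {set L}}} :=
  [set x in setparts L | ptype n x \in tA].

Lemma sA_in (L : finType) n (A : {set {set {set L}}}) : #|L| = n ->
  A \in PII L -> ptypeII n A \in PtII L n.
Proof.
move=> hn /downP [A0 AS hd]; apply/downP; split.
- case/set0Pn: A0 => x xA; apply/set0Pn; exists (ptype n x); exact: imset_f.
- apply/subsetP => _ /imsetP[x xA ->]; apply: ptype_int => //.
  by move: (subsetP AS x xA); rewrite inE.
- move=> _ a /imsetP[x xA ->] ai ia.
  have px : partition x [set: L] by move: (subsetP AS x xA); rewrite inE.
  have [u [pu <- r]] := down hn px ia.
  by apply: imset_f; apply: (hd x) => //; rewrite inE.
Qed.

Lemma pre_in (L : finType) n (tA : {set IP n}) : #|L| = n ->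
  tA \in PtII L n -> pre L tA \in PII L /\ ptypeII n (pre L tA) = tA.
Proof.
move=> hn /downP [A0 AS hd].
have sur : forall a, a \in tA -> exists2 x, x \in pre L tA & ptype n x = a.
  move=> a aA; have [x px xa] := ptype_surj hn (subsetP AS a aA).
  by exists x => //; rewrite !inE px xa aA.
split.
  apply/downP; split.
  - case/set0Pn: A0 => a aA; have [x xp _] := sur a aA; apply/set0Pn; by exists x.
  - by apply/subsetP => x; rewrite inE => /andP[].
  - move=> x y; rewrite !inE => /andP[px xA] py r; rewrite py /=.
    apply: (hd _ _ xA); first exact: ptype_int.
    exact: ref_iref.
apply/setP => a; apply/imsetP/idP => [[x] | aA].
  by rewrite inE => /andP[_ h] ->.
by have [x xp xa] := sur a aA; exists x.
Qed.

Definition preF (L : finType) n (tF : {set {set IP n}}) : {set {set {set {set L}}}} :=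
  [set A in PII L | ptypeII n A \in tF].

Lemma sF_in (L : finType) n (F : {set {set {set {set L}}}}) : #|L| = n ->
  F \in PIII L -> ptypeIII n F \in PtIII L n.
Proof.
move=> hn /upP [F0 FS hu]; apply/upP; split.
- case/set0Pn: F0 => A AF; apply/set0Pn; exists (ptypeII n A); exact: imset_f.
- apply/subsetP => _ /imsetP[A AF ->]; apply: sA_in => //; exact: (subsetP FS).
- move=> _ tB /imsetP[A AF ->] tBin sAB.
  have [pin pe] := pre_in hn tBin.
  rewrite -pe; apply: imset_f; apply: (hu A) => //.
  have /downP [_ AS _] := subsetP FS A AF.
  apply/subsetP => x xA; rewrite inE (subsetP AS x xA) /=.
  by apply: (subsetP sAB); apply: imset_f.
Qed.

Lemma preF_in (L : finType) n (tF : {set {set IP n}}) : #|L| = n ->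
  tF \in PtIII L n -> preF L tF \in PIII L /\ ptypeIII n (preF L tF) = tF.
Proof.
move=> hn /upP [F0 FS hu].
have sur : forall tA, tA \in tF -> exists2 A, A \in preF L tF & ptypeII n A = tA.
  move=> tA tAF; have [pin pe] := pre_in hn (subsetP FS tA tAF).
  by exists (pre L tA) => //; rewrite inE pin pe tAF.
split.
  apply/upP; split.
  - case/set0Pn: F0 => tA tAF; have [A Ap _] := sur tA tAF; apply/set0Pn; by exists A.
  - by apply/subsetP => A; rewrite inE => /andP[].
  - move=> A B AinF pB sAB; move: AinF; rewrite inE => /andP[pA AF]; rewrite inE pB /=.
    apply: (hu _ _ AF); first exact: sA_in.
    exact: imsetS.
apply/setP => tA; apply/imsetP/idP => [[A] | tAF].
  by rewrite inE => /andP[_ h] ->.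
by have [A Ap Aa] := sur tA tAF; exists A.
Qed.

Unset Implicit Arguments.
Set Strict Implicit.

Theorem corollary1 (L : finType) (n : nat) (hn : #|L| = n) :
  (* (a) irefines is a partial order on the integer partitions of n *)
  [/\ (forall a, a \in intparts n -> irefines L a a),
      (forall a b, a \in intparts n -> b \in intparts n ->
         irefines L a b -> irefines L b a -> a = b) &
      (forall a b c, a \in intparts n -> b \in intparts n -> c \in intparts n ->
         irefines L a b -> irefines L b c -> irefines L a c)]
  /\
  (* (b) *)
  ([set ptypeII n A | A in PII L] = PtII L n /\
   forall tA tB, tA \in PtII L n -> tB \in PtII L n ->
     ((exists A B, [/\ A \in PII L, B \in PII L, ptypeII n A = tA,
                       ptypeII n B = tB & B \subset A])
      <-> tB \subset tA))
  /\
  (* (c) *)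
  ([set ptypeIII n F | F in PIII L] = PtIII L n /\
   forall tF tG, tF \in PtIII L n -> tG \in PtIII L n ->
     ((exists F G, [/\ F \in PIII L, G \in PIII L, ptypeIII n F = tF,
                       ptypeIII n G = tG & G \subset F])
      <-> tG \subset tF)).
Proof.
split; [split | split; split].
- move=> a ai; have [x px xa] := ptype_surj hn ai.
  by rewrite -xa; apply: ref_iref => //; apply: refines_refl.
- move=> a b ai bi /irefP [u [x [pu px ua xb r]]] iba.
  rewrite -ua in iba; have [w [pw wb rw]] := down hn pu iba.
  have [c1 e1] := refines_card pu px r.
  have [c2 _] := refines_card pw pu rw.
  have c3 : #|w| = #|x| by rewrite -(nparts hn pw) -(nparts hn px) wb xb.
  have ux : u = x by apply: e1; apply/eqP; rewrite eqn_leq c1 andbT -c3 c2.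
  by rewrite -ua -xb ux.
- move=> a b c ai bi ci iab /irefP [y [z [py pz yb zc r]]].
  rewrite -yb in iab; have [u [pu ua ru]] := down hn py iab.
  by rewrite -ua -zc; apply: ref_iref => //; apply: refines_trans ru r.
- apply/setP => tA; apply/imsetP/idP => [[A Ain ->] | tAin]; first exact: sA_in.
  by have [pin pe] := pre_in hn tAin; exists (pre L tA).
- move=> tA tB tAin tBin; split.
    by case=> [A [B [_ _ <- <- BA]]]; apply: imsetS.
  move=> sBA; have [pA eA] := pre_in hn tAin; have [pB eB] := pre_in hn tBin.
  exists (pre L tA), (pre L tB); split => //.
  by apply/subsetP => x; rewrite !inE => /andP[-> /(subsetP sBA) ->].
- apply/setP => tF; apply/imsetP/idP => [[F Fin ->] | tFin]; first exact: sF_in.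
  by have [pin pe] := preF_in hn tFin; exists (preF L tF).
- move=> tF tG tFin tGin; split.
    by case=> [F [G [_ _ <- <- GF]]]; apply: imsetS.
  move=> sGF; have [pF eF] := preF_in hn tFin; have [pG eG] := preF_in hn tGin.
  exists (preF L tF), (preF L tG); split => //.
  by apply/subsetP => x; rewrite !inE => /andP[-> /(subsetP sGF) ->].
Qed.
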